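(* Let $n,k,\delta,\alpha$ be positive integers with $1\le\delta\le k$, $\delta+k\le n$ and $\alpha\ge2$. Then $$\mathcal B_q(n,k,\delta;\alpha)\ge(\alpha-1)\,q^{\max\{k,n-k\}(\min\{k,n-k\}-\delta+1)}.$$
   Context: An $\alpha$-$(n,k,\delta)_q^c$ covering Grassmannian code is a finite multiset of $k$-dimensional subspaces of $\mathbb F_q^n$ such that any $\alpha$ of its elements (taken with distinct indices) span a subspace of dimension at least $k+\delta$. $\mathcal B_q(n,k,\delta;\alpha)$ denotes the maximum size of such a code. *)

(* Defs.v *)
From HB Require Import structures.
From mathcomp Require Import all_boot all_order all_algebra all_field.
Set Implicit Arguments. Unset Strict Implicit. Unset Printing Implicit Defensive.
Import GRing.Theory.
Local Open Scope ring_scope.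

(* A finite multiset of k-dimensional subspaces of F^n, given as an indexed
   family C : 'I_m -> {vspace 'rV[F]_n}, is an alpha-(n,k,delta)_q^c covering
   Grassmannian code if every member has dimension k and any alpha members
   with pairwise distinct indices span a subspace of dimension >= k + delta. *)
Definition covering_grassmannian_code (F : fieldType) (n k delta alpha m : nat)
  (C : 'I_m -> {vspace 'rV[F]_n}) : Prop :=
  (forall i, \dim (C i) = k) /\
  (forall f : 'I_alpha -> 'I_m, injective f ->
     (k + delta <= \dim (\sum_(j < alpha) C (f j))%VS)%N).
Arguments covering_grassmannian_code F n k delta alpha m C : clear implicits.

(* Main.v *)
Require Import Defs.
From HB Require Import structures.
From mathcomp Require Import all_boot all_order all_algebra all_field.
From mathcomp Require Import all_fingroup all_solvable zify.
Set Implicit Arguments. Unset Strict Implicit. Unset Printing Implicit Defensive.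
Import GRing.Theory FinRing.Theory.
Local Open Scope ring_scope.


Section VList.
Variables (F : finFieldType) (vT : vectType F).

Lemma vlist (V : {vspace vT}) :
  exists s : seq vT, [/\ uniq s, size s = (#|F| ^ \dim V)%N & forall x, (x \in s) = (x \in V)].
Proof.
set n := \dim V.
pose rV2V (rv : 'rV[F]_n) := \sum_i rv 0 i *: (vbasis V)`_i.
have freeV: free (vbasis V) := basis_free (vbasisP V).
have inj : injective rV2V.
  move=> r1 r2 /(congr1 (fun v => \row_i coord (vbasis V) i v)) => H.
  apply/rowP=> i; move/rowP: H => /(_ i); rewrite !mxE !coord_sum_free //.
exists (map rV2V (enum 'rV[F]_n)); split.
- by rewrite map_inj_uniq ?enum_uniq.
- by rewrite size_map -cardE card_mx mul1n.
- move=> x; apply/idP/idP.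
  + case/mapP=> rv _ ->; apply: rpred_sum => i _.
    by rewrite rpredZ ?vbasis_mem ?memt_nth.
  + move/coord_vbasis => ->; apply/mapP; exists (\row_i coord (vbasis V) i x).
      by rewrite mem_enum.
    by rewrite /rV2V; apply: eq_bigr => i _; rewrite mxE.
Qed.
End VList.


Lemma card_natr0 (F : finFieldType) : (#|F|%:R : F) = 0.
Proof.
have := @expg_cardG _ [set: F] (1%R : F) (in_setT _).
rewrite zmodXgE cardsT; exact.
Qed.

Lemma ext_exists (F : finFieldType) b : (0 < b)%N ->
  {L : splittingFieldType F | \dim {:L} = b}.
Proof.
move=> b_gt0; set q := #|F|; pose m := (q ^ b)%N.
have q_gt1 : (1 < q)%N := finNzRing_gt1 F.
have m_gt1: (m > 1)%N by rewrite -(expn0 q) ltn_exp2l.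
have m_gt0 := ltnW m_gt1; have m1_gt0: (m.-1 > 0)%N by rewrite -ltnS prednK.
pose qp (R : nzRingType) : {poly R} := 'X^m - 'X.
have Dq R: qp R = ('X^(m.-1) - 1) * ('X - 0).
  by rewrite subr0 mulrBl mul1r -exprSr prednK.
have /FinSplittingFieldFor[/= L splitLq]: qp F != 0.
  by rewrite Dq monic_neq0 ?rpredM ?monicXsubC ?monicXnsubC.
rewrite [map_poly _ _]rmorphB rmorphXn /= map_polyX -/(qp L) in splitLq.
exists L.
have /finField_galois_generator[/= a _ Da]: (1 <= {:L})%VS by apply: sub1v.
rewrite dimv1 expn1 in Da.
pose Em := fixedSpace (a ^+ b)%g.
have{splitLq} [zs DqL defL] := splitLq.
have mL0 : (m%:R : L) = 0.
  by rewrite /m natrX -[q%:R](rmorph_nat (in_alg L)) card_natr0 rmorph0 expr0n gtn_eqF.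
have Uzs: uniq zs.
  rewrite -separable_prod_XsubC -(eqp_separable DqL) Dq separable_root andbC.
  rewrite /root !hornerE subr_eq0 eq_sym expr0n gtn_eqF ?oner_eq0 //=.
  rewrite cyclotomic.separable_Xn_sub_1 // -subn1 natrB // subr_eq0.
  by rewrite mL0 eq_sym oner_eq0.
have in_zs: zs =i Em.
  move=> z; rewrite -root_prod_XsubC -(eqp_root DqL) (sameP fixedSpaceP eqP).
  rewrite /root !hornerE subr_eq0 /= /m; congr (_ == z).
  elim: (b) => [|i IHi]; first by rewrite gal_id.
  by rewrite expgSr expnSr exprM IHi galM ?Da ?memvf.
have defEm: Em = {:L}%VS.
  apply/eqP; rewrite eqEsubv subvf -defL -[Em]subfield_closed agenvS //.
  by rewrite subv_add sub1v; apply/span_subvP=> z; rewrite in_zs.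
have all_zs x : x \in zs by rewrite in_zs defEm memvf.
have [s [Us Ss Ms]] := vlist {:L}.
have size_zs: size zs = m.
  apply: succn_inj; rewrite -(size_prod_XsubC _ id) -(eqp_size DqL).
  by rewrite size_polyDl size_polyXn // size_polyN size_polyX.
apply: (@expnI q q_gt1); rewrite -Ss -/m -size_zs; apply/eqP.
rewrite eqn_leq !uniq_leq_size //.
  by move=> x _; rewrite Ms memvf.
Qed.


Lemma ker_bound (F : finFieldType) (L : fieldExtType F) (t : nat) (e : 'I_t -> L)
   (f : 'End(L)) j :
  e j != 0 -> (forall x, f x = \sum_(i < t) e i * x ^+ (#|F| ^ i)) ->
  (\dim (lker f) <= t.-1)%N.
Proof.
move=> ej Df; set q := #|F|.
have q_gt1 : (1 < q)%N := finNzRing_gt1 F.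
pose P : {poly L} := \sum_(i < t) e i *: 'X^(q ^ i).
have PE x : P.[x] = f x.
  by rewrite Df horner_sum; apply: eq_bigr => i _; rewrite hornerZ hornerXn.
have PC k : P`_k = \sum_(i < t | (q ^ i)%N == k) e i by rewrite coef_sumMXn.
have Pn0 : P != 0.
  apply/eqP => /(congr1 (fun p : {poly L} => p`_(q ^ j))); rewrite PC coef0.
  rewrite (big_pred1 j) => [/eqP|i /=]; first by rewrite (negbTE ej).
  by rewrite eqn_exp2l // (inj_eq val_inj).
have Psz : (size P <= (q ^ t.-1).+1)%N.
  apply/leq_sizeP => k hk; rewrite PC big_pred0 // => i.
  apply/negbTE; rewrite neq_ltn; apply/orP; left.
  apply: leq_trans hk; rewrite ltnS leq_exp2l //.
  by rewrite -ltnS prednK ?(leq_ltn_trans _ (ltn_ord i)).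
have [s [Us Ss Ms]] := vlist (lker f).
have := max_poly_roots Pn0 _ Us.
rewrite Ss => /(_ _)/leq_trans/(_ Psz).
rewrite ltnS leq_exp2l //; apply.
by apply/allP => x; rewrite Ms memv_ker /root PE.
Qed.


Lemma ker_comp (K : fieldType) (U V W : vectType K) (f : 'Hom(U, V)) (g : 'Hom(V, W)) :
  (\dim (lker (g \o f)%VF) <= \dim (lker f) + \dim (lker g))%N.
Proof.
set Kg := lker _.
have := limg_ker_dim f Kg; move=> <-.
apply: leq_add; first by apply: dimvS; apply: capvSr.
apply: dimvS; rewrite lkerE -limg_comp; apply/eqP.
by apply/eqP; rewrite -lkerE.
Qed.

Fixpoint frob (K : fieldType) (L : vectType K) (s : 'End(L)) i : 'End(L) :=
  if i is i'.+1 then (s \o frob s i')%VF else \1%VF.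

Definition linz (F : fieldType) (L : falgType F) (s : 'End(L)) t (c : 'I_t -> L) : 'End(L) :=
  \sum_(i < t) (amull (c i) \o frob s i)%VF.

Lemma frobE (F : fieldType) (L : falgType F) (s : 'End(L)) q
  (Ds : forall x, s x = x ^+ q) i x : frob s i x = x ^+ (q ^ i).
Proof.
elim: i => [|i IH] /=; first by rewrite id_lfunE expn0 expr1.
by rewrite comp_lfunE IH Ds expnSr exprM.
Qed.

Lemma linzE (F : fieldType) (L : falgType F) (s : 'End(L)) q
  (Ds : forall x, s x = x ^+ q) t (c : 'I_t -> L) x :
  linz s c x = \sum_(i < t) c i * x ^+ (q ^ i).
Proof.
rewrite /linz sum_lfunE; apply: eq_bigr => i _.
by rewrite comp_lfunE (frobE Ds) lfunE.
Qed.

Lemma frob_exists (F : finFieldType) (L : splittingFieldType F) :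
  exists s : 'End(L), forall x, s x = x ^+ #|F|.
Proof.
have /finField_galois_generator[/= a _ Da]: (1 <= {:L})%VS by apply: sub1v.
rewrite dimv1 expn1 in Da.
exists (gal_repr a) => x; exact: Da (memvf x).
Qed.


Section Graph.
Variables (F : fieldType) (k l : nat).

Definition gmap (h : 'Hom('rV[F]_k, 'rV[F]_l)) : 'Hom('rV[F]_k, 'rV[F]_(k + l)) :=
  (linfun (mulmxr (row_mx 1%:M 0)) + (linfun (mulmxr (row_mx 0 1%:M)) \o h))%VF.

Lemma gmapE h u : gmap h u = row_mx u (h u).
Proof.
rewrite /gmap add_lfunE comp_lfunE !lfunE /= !mul_mx_row mulmx1 !mulmx0.
by rewrite mulmx1 add_row_mx addr0 add0r.
Qed.

Definition gsp h := (gmap h @: fullv)%VS.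

Lemma dim_gsp h : \dim (gsp h) = k.
Proof.
rewrite /gsp limg_dim_eq ?dimvf /dim /= ?mul1n //.
apply/eqP; rewrite capfv; apply/lker0P => u v; rewrite !gmapE.
by case/eq_row_mx.
Qed.

Lemma cap_gsp h1 h2 : (\dim (gsp h1 :&: gsp h2) <= \dim (lker (h1 - h2)%R))%N.
Proof.
apply: (@leq_trans (\dim (gmap h1 @: lker (h1 - h2)%R)%VS)).
  apply: dimvS; apply/subvP => w /memv_capP [/memv_imgP [u _ ->]].
  case/memv_imgP => v _; rewrite !gmapE => /eq_row_mx [<- E].
  by rewrite -gmapE; apply: memv_img; rewrite memv_ker add_lfunE opp_lfunE E subrr.
by rewrite -(limg_ker_dim (gmap h1) (lker (h1 - h2)%R)) leq_addl.
Qed.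

Lemma sum_gsp delta h1 h2 : (delta <= k)%N -> (\dim (lker (h1 - h2)%R) <= k - delta)%N ->
  (k + delta <= \dim (gsp h1 + gsp h2))%N.
Proof.
move=> dk hk; have := dimv_sum_cap (gsp h1) (gsp h2).
rewrite !dim_gsp; have := leq_trans (cap_gsp h1 h2) hk; lia.
Qed.
End Graph.


Lemma pigeon alpha m (f : 'I_alpha -> 'I_m) : (2 <= alpha)%N -> injective f ->
  exists j1 j2, (f j1 %/ alpha.-1)%N != (f j2 %/ alpha.-1)%N.
Proof.
move=> a2 finj; have a0 : (0 < alpha)%N by lia.
have a1 : (0 < alpha.-1)%N by lia.
pose j0 := Ordinal a0.
case: (boolP [exists j1, exists j2, (f j1 %/ alpha.-1)%N != (f j2 %/ alpha.-1)%N]).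
  by case/existsP => j1 /existsP [j2 H]; exists j1, j2.
move/existsPn => H.
have E j : (f j %/ alpha.-1 = f j0 %/ alpha.-1)%N.
  by have /existsPn/(_ j0) := H j; rewrite negbK => /eqP.
pose g j := Ordinal (ltn_pmod (f j) a1).
have ginj : injective g.
  move=> x y /(congr1 val) /= Hxy; apply: finj; apply: val_inj.
  by rewrite [LHS](divn_eq _ alpha.-1) [RHS](divn_eq _ alpha.-1) !E Hxy.
have := leq_card g ginj; rewrite !card_ord; lia.
Qed.

Lemma code_of (F : fieldType) k l delta alpha (T : finType)
  (h : T -> 'Hom('rV[F]_k, 'rV[F]_l)) :
  (delta <= k)%N -> (2 <= alpha)%N ->
  (forall c d, c != d -> (\dim (lker (h c - h d)%R) <= k - delta)%N) ->
  exists C : 'I_((alpha - 1) * #|T|) -> {vspace 'rV[F]_(k + l)},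
    covering_grassmannian_code F (k + l) k delta alpha _ C.
Proof.
move=> dk a2 hker.
have a1 : (0 < alpha - 1)%N by lia.
have lt (i : 'I_((alpha - 1) * #|T|)) : (i %/ (alpha - 1) < #|T|)%N.
  by rewrite ltn_divLR //; have := ltn_ord i; rewrite [X in (_ < X)%N -> _]mulnC.
exists (fun i => gsp (h (enum_val (Ordinal (lt i))))); split.
  by move=> i; apply: dim_gsp.
move=> f finj.
have [j1 [j2 Hj]] := pigeon a2 finj.
have Ed : (alpha.-1 = alpha - 1)%N by lia.
rewrite Ed in Hj.
set c1 := enum_val (Ordinal (lt (f j1))); set c2 := enum_val (Ordinal (lt (f j2))).
have c12 : c1 != c2.
  apply: contra Hj => /eqP /enum_val_inj /(congr1 val) /= ->; by [].
apply: leq_trans (sum_gsp dk (hker _ _ c12)) _.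
apply: dimvS; rewrite subv_add; apply/andP; split.
  by apply: (sumv_sup j1).
by apply: (sumv_sup j2).
Qed.

Import passmx.

Theorem mainTheorem14 (F : finFieldType) (n k delta alpha : nat) :
  (0 < n)%N -> (1 <= delta)%N -> (delta <= k)%N -> (delta + k <= n)%N ->
  (2 <= alpha)%N ->
  exists (m : nat) (C : 'I_m -> {vspace 'rV[F]_n}),
    covering_grassmannian_code F n k delta alpha m C /\
    ((alpha - 1) * #|F| ^ (maxn k (n - k) * (minn k (n - k) - delta + 1)) <= m)%N.
Proof.
move=> n0 d1 dk dkn a2.
move El: (n - k)%N => l.
have En : n = (k + l)%N by lia.
subst n; clear El.
set b := maxn k l; set a := minn k l; set t := (a - delta + 1)%N.
have b0 : (0 < b)%N by lia.
have [L dimL] := ext_exists F b0.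
have [s Ds] := frob_exists L.
have [sL [UsL SsL MsL]] := vlist {:L}.
rewrite dimL in SsL.
pose d := \dim {:L}.
have dE : d = b by rewrite -dimL.
pose eL := vbasis {:L}.
have eB : basis_of {:L} eL := vbasisP _.
pose phi : 'Hom('rV[F]_k, L) :=
  (linfun (passmx.vecof eL) \o linfun (mulmxr (pid_mx k : 'M[F]_(k, d))))%VF.
pose psi : 'Hom(L, 'rV[F]_l) :=
  (linfun (mulmxr (pid_mx l : 'M[F]_(d, l))) \o linfun (passmx.rVof eL))%VF.
pose T := {ffun 'I_t -> 'I_(size sL)}.
pose h (c : T) := (psi \o linz s (fun i => nth 0 sL (c i)) \o phi)%VF.
have hker : forall c c' : T, c != c' -> (\dim (lker (h c - h c')%R) <= k - delta)%N.
  move=> c c' cc'.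
  have [j Hj] : exists j, c j != c' j.
    case: (boolP [exists j, c j != c' j]) => [/existsP//|/existsPn H].
    by case/negP: cc'; apply/eqP/ffunP => j; apply/eqP; have := H j; rewrite negbK.
  pose e i := sL`_(c i) - sL`_(c' i).
  have ej : e j != 0.
    by rewrite subr_eq0 nth_uniq.
  pose g := (linz s (fun i => sL`_(c i)) - linz s (fun i => sL`_(c' i)))%R.
  have gE x : g x = \sum_(i < t) e i * x ^+ (#|F| ^ i).
    rewrite add_lfunE opp_lfunE !(linzE Ds) -sumrB.
    by apply: eq_bigr => i _; rewrite mulrBl.
  have Eh : (h c - h c')%R = (psi \o g \o phi)%VF.
    apply/lfunP => u; rewrite add_lfunE opp_lfunE !comp_lfunE add_lfunE opp_lfunE.
    by rewrite -!linearB.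
  have kg := ker_bound ej gE.
  have kphi : \dim (lker phi) = 0%N.
    apply/eqP; rewrite dimv_eq0; apply/lker0P => u v.
    rewrite !comp_lfunE !lfunE /= => /(can_inj (passmx.vecofK eB)) H.
    have := congr1 (mulmxr (pid_mx k : 'M[F]_(d, k))) H; rewrite /= -!mulmxA.
    rewrite pid_mx_id; last by rewrite dE; lia.
    have P1 : (pid_mx k : 'M[F]_k) = 1%:M by apply/matrixP => i0 j0; rewrite !mxE ltn_ord andbT.
    by rewrite P1 !mulmx1.
  have kpsi : (\dim (lker psi) <= d - l)%N.
    have := limg_ker_dim psi fullv; rewrite capfv.
    have -> : (psi @: fullv)%VS = fullv.
      apply/eqP; rewrite eqEsubv subvf /=; apply/subvP => y _.
      have -> : y = psi (passmx.vecof eL (y *m (pid_mx l : 'M[F]_(l, d)))).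
        rewrite !comp_lfunE !lfunE /= (passmx.vecofK eB) -mulmxA.
        rewrite pid_mx_id; last by rewrite dE; lia.
        have P1 : (pid_mx l : 'M[F]_l) = 1%:M by apply/matrixP => i0 j0; rewrite !mxE ltn_ord andbT.
        by rewrite P1 mulmx1.
      by apply: memv_img; rewrite memvf.
    have dfull : \dim (fullv : {vspace 'rV[F]_l}) = l by rewrite dimvf /dim /= mul1n.
    rewrite dfull -/d; lia.
  rewrite Eh.
  apply: leq_trans (ker_comp _ _) _; rewrite kphi add0n.
  apply: leq_trans (ker_comp _ _) _.
  move: kg kpsi; rewrite dE /t /a /b -subn1. move: (\dim (lker g)) (\dim (lker psi)) => x y. rewrite /minn /maxn; case: ltnP => ?; lia.
have [C HC] := @code_of F k l delta alpha T h dk a2 hker.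
exists ((alpha - 1) * #|T|)%N, C; split => //.
by rewrite /T card_ffun !card_ord SsL -expnM.
Qed.
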